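(* A collection $C:\mathbf{elTr}^{\mathrm{op}}\to\mathbf{Set}$ is isomorphic to $R_0(\mathsf P)=\mathrm{Hom}_{\mathbf{PolyEnd}}(-,\mathsf P)|_{\mathbf{elTr}}$ for some polynomial endofunctor $\mathsf P$ if and only if $C$ is flat, i.e. every colour-preserving surjection $Z\to C$ of collections admits a section.
   Context: A polynomial endofunctor is a diagram of sets $P_0\xleftarrow{s}P_2\xrightarrow{p}P_1\xrightarrow{t}P_0$ with $p$ having finite fibres; a morphism is a triple of maps commuting with $s,p,t$ whose middle square is a pullback; these form $\mathbf{PolyEnd}$. Elementary trees: the trivial tree $|=(1\leftarrow0\to0\to1)$ and, for each $n\in\mathbb N$, the one-node tree $\mathbf n=(n+1\xleftarrow{s}n\to1\xrightarrow{t}n+1)$ with $s,t$ the sum inclusions. $\mathbf{elTr}$ is the full subcategory of $\mathbf{PolyEnd}$ on these objects (it has $n+1$ arrows $|\to\mathbf n$ and $n!$ automorphisms of $\mathbf n$). A collection is a presheaf $C$ on $\mathbf{elTr}$; its set of colours is $C(|)$. A morphism of collections $Z\to C$ is colour preserving if its component at $|$ is a bijection (identity on colours), and it is a surjection if all its components are surjective. *)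

(* Defs.v *)
From mathcomp Require Import all_boot.
From Stdlib Require List.
From Stdlib Require Import FunctionalExtensionality ProofIrrelevance.
Set Implicit Arguments. Unset Strict Implicit. Unset Printing Implicit Defensive.

(* P0 <-s- P2 -p-> P1 -t-> P0, with p having finite fibres. *)
Record PolyEnd := {
  P0 : Type; P2 : Type; P1 : Type;
  ps : P2 -> P0; pp : P2 -> P1; pt : P1 -> P0;
  pfin : forall b : P1, exists l : list P2, forall e, pp e = b -> List.In e l }.

(* The middle square  E2 -> E1 / P2 -> P1  is a (set-theoretic) pullback:
   E2 -> E1 x_{P1} P2 is a bijection. *)
Definition is_pullback (E P : PolyEnd) (f2 : P2 E -> P2 P) (f1 : P1 E -> P1 P) :=
  forall (a : P1 E) (y : P2 P), f1 a = pp y ->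
    exists! x : P2 E, pp x = a /\ f2 x = y.

Record PolyHom (E P : PolyEnd) := {
  h0 : P0 E -> P0 P; h2 : P2 E -> P2 P; h1 : P1 E -> P1 P;
  hs : forall x, h0 (ps x) = ps (h2 x);
  hp : forall x, h1 (pp x) = pp (h2 x);
  ht : forall b, h0 (pt b) = pt (h1 b);
  hpb : is_pullback h2 h1 }.

Lemma idHom_pb (E : PolyEnd) : is_pullback (E:=E) (P:=E) id id.
Proof.
move=> a y /= ->; exists y; split; first by [].
by move=> x [_ ->].
Qed.

Definition idHom (E : PolyEnd) : PolyHom E E :=
  @Build_PolyHom E E id id id (fun _ => erefl) (fun _ => erefl) (fun _ => erefl)
    (@idHom_pb E).

Lemma compHom_pb (E F G : PolyEnd) (f : PolyHom E F) (g : PolyHom F G) :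
  is_pullback (fun x => h2 g (h2 f x)) (fun a => h1 g (h1 f a)).
Proof.
move=> a y Hay.
have [z [[Hz1 Hz2] Uz]] := (@hpb _ _ g) _ _ Hay.
have Haz : h1 f a = pp z by rewrite Hz1.
have [x [[Hx1 Hx2] Ux]] := (@hpb _ _ f) _ _ Haz.
exists x; split; first by split; [|rewrite Hx2].
move=> x' [Hx'1 Hx'2]; apply: Ux; split => //.
symmetry; apply: Uz; split => //; by rewrite -hp Hx'1.
Qed.

(* compHom f g = g o f *)
Definition compHom (E F G : PolyEnd) (f : PolyHom E F) (g : PolyHom F G) : PolyHom E G.
Proof.
refine (@Build_PolyHom E G (fun x => h0 g (h0 f x)) (fun x => h2 g (h2 f x))
          (fun a => h1 g (h1 f a)) _ _ _ (@compHom_pb _ _ _ f g)).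
- by move=> x; rewrite hs hs.
- by move=> x; rewrite hp hp.
- by move=> b; rewrite ht ht.
Defined.

Definition trivTree : PolyEnd.
Proof.
refine (@Build_PolyEnd unit Empty_set Empty_set
          (fun e => match e with end) (fun e => match e with end)
          (fun e => match e with end) _).
by case.
Defined.

(* one-node tree n = (n+1 <-s- n -> 1 -t-> n+1), s,t the sum inclusions
   (n+1 = n + 1 with the first summand {0..n-1} and second summand {n}). *)
Definition nodeTree (n : nat) : PolyEnd.
Proof.
refine (@Build_PolyEnd 'I_n.+1 'I_n unit
          (fun i => widen_ord (leqnSn n) i) (fun _ => tt) (fun _ => ord_max) _).
move=> b; exists (enum 'I_n) => e _.
have : e \in enum 'I_n by rewrite mem_enum.
elim: (enum 'I_n) => [|z l IH] //=; rewrite in_cons => /orP [/eqP ->|/IH]; by [left|right].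
Defined.

Inductive elObj : Type := Triv | Node of nat.

Definition tree (a : elObj) : PolyEnd :=
  match a with Triv => trivTree | Node n => nodeTree n end.

(* elTr is the full subcategory of PolyEnd on these objects:
   Hom_elTr(a,b) = PolyHom (tree a) (tree b). *)

Record Collection := {
  cobj : elObj -> Type;
  cmap : forall a b : elObj, PolyHom (tree a) (tree b) -> cobj b -> cobj a;
  cmap_id : forall a (x : cobj a), cmap (idHom (tree a)) x = x;
  cmap_comp : forall a b c (f : PolyHom (tree a) (tree b))
                (g : PolyHom (tree b) (tree c)) (x : cobj c),
      cmap (compHom f g) x = cmap f (cmap g x) }.

Definition colours (C : Collection) : Type := cobj C Triv.

Record CollHom (Z C : Collection) := {
  cmp : forall a, cobj Z a -> cobj C a;
  natural : forall a b (f : PolyHom (tree a) (tree b)) (x : cobj Z b),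
      cmp (cmap f x) = cmap f (cmp x) }.
Arguments cmp {Z C} c a _.

Definition bijective_map (A B : Type) (f : A -> B) :=
  exists g : B -> A, (forall x, g (f x) = x) /\ (forall y, f (g y) = y).

Definition colour_preserving (Z C : Collection) (u : CollHom Z C) :=
  bijective_map (cmp u Triv).

Definition coll_surjective (Z C : Collection) (u : CollHom Z C) :=
  forall a (y : cobj C a), exists x, cmp u a x = y.

Definition has_section (Z C : Collection) (u : CollHom Z C) :=
  exists v : CollHom C Z, forall a (y : cobj C a), cmp u a (cmp v a y) = y.

Definition flat (C : Collection) :=
  forall (Z : Collection) (u : CollHom Z C),
    colour_preserving u -> coll_surjective u -> has_section u.

Definition coll_iso (C D : Collection) :=
  exists (u : CollHom C D) (v : CollHom D C),
    (forall a x, cmp v a (cmp u a x) = x) /\ (forall a y, cmp u a (cmp v a y) = y).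

Lemma PolyHom_ext (E P : PolyEnd) (f g : PolyHom E P) :
  (forall x, h0 f x = h0 g x) -> (forall x, h2 f x = h2 g x) ->
  (forall x, h1 f x = h1 g x) -> f = g.
Proof.
case: f => f0 f2 f1 fs fp ft fpb; case: g => g0 g2 g1 gs gp gt gpb /= E0 E2 E1.
move: (functional_extensionality _ _ E0) (functional_extensionality _ _ E2)
      (functional_extensionality _ _ E1) => ???; subst.
f_equal; apply: proof_irrelevance.
Qed.

Definition R0 (P : PolyEnd) : Collection.
Proof.
refine (@Build_Collection (fun a => PolyHom (tree a) P)
          (fun a b f g => compHom f g) _ _).
- by move=> a g; apply: PolyHom_ext.
- by move=> a b c f g x; apply: PolyHom_ext.
Defined.

(* Main.v *)
Require Import Defs.
From mathcomp Require Import all_boot.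
From Stdlib Require Import ClassicalEpsilon FunctionalExtensionality ProofIrrelevance PropExtensionality.
Set Implicit Arguments. Unset Strict Implicit. Unset Printing Implicit Defensive.

Lemma hom_NT n (f : PolyHom (tree (Node n)) (tree Triv)) : False.
Proof. by move: (h1 f tt); case. Qed.

Lemma hom_TT (f : PolyHom (tree Triv) (tree Triv)) : f = idHom _.
Proof. by apply: PolyHom_ext => //; case; case: (h0 f tt). Qed.

Definition edge n (j : 'I_n.+1) : PolyHom (tree Triv) (tree (Node n)).
Proof.
refine (@Build_PolyHom (tree Triv) (tree (Node n)) (fun _ => j)
  (fun e => match e with end) (fun e => match e with end) _ _ _ _); by case.
Defined.

Lemma hom_TN n (f : PolyHom (tree Triv) (tree (Node n))) : f = edge (h0 f tt).
Proof. by apply: PolyHom_ext => //; case. Qed.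

Lemma compHom_id_l a (P : PolyEnd) (f : PolyHom (tree a) P) : compHom (idHom _) f = f.
Proof. by apply: PolyHom_ext. Qed.

Lemma ord_cases n (j : 'I_n.+1) : j = ord_max \/ exists i : 'I_n, j = widen_ord (leqnSn n) i.
Proof.
case: (unliftP ord_max j) => [i ->|->]; last by left.
right; exists i; apply: val_inj; by rewrite /= /bump leqNgt ltn_ord.
Qed.

Section NodeHom.
Variables (n : nat) (P : PolyEnd) (g : PolyHom (tree (Node n)) P).

Lemma h2_inj : injective (h2 g).
Proof.
move=> i j E.
have H : h1 g tt = pp (h2 g i) by rewrite -(hp g i).
have [x [_ U]] := hpb H.
by rewrite -(U i) ?(U j) //; split; case: (pp _).
Qed.

Lemma h2_surj y : pp y = h1 g tt -> exists i, h2 g i = y.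
Proof.
move=> H; have [x [[_ Hx] _]] := hpb (esym H); by exists x.
Qed.

Lemma h0_widen i : h0 g (widen_ord (leqnSn n) i) = ps (h2 g i).
Proof. exact: (hs g i). Qed.

Lemma h0_max : h0 g ord_max = pt (h1 g tt).
Proof. exact: (ht g tt). Qed.
End NodeHom.

Lemma node_ext n (P : PolyEnd) (g g' : PolyHom (tree (Node n)) P) :
  h2 g =1 h2 g' -> h1 g tt = h1 g' tt -> g = g'.
Proof.
move=> E2 E1; apply: PolyHom_ext => //=; last by case.
move=> j; case: (ord_cases j) => [->|[i ->]].
  by rewrite !h0_max E1.
by rewrite !h0_widen E2.
Qed.

Lemma node_ext' n m (g g' : PolyHom (tree (Node n)) (tree (Node m))) :
  h2 g =1 h2 g' -> g = g'.
Proof. by move=> E; apply: node_ext => //; case: (h1 g tt); case: (h1 g' tt). Qed.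

Lemma nn_h0_widen n m (g : PolyHom (tree (Node n)) (tree (Node m))) i :
  h0 g (widen_ord (leqnSn n) i) = widen_ord (leqnSn m) (h2 g i).
Proof. exact: h0_widen. Qed.

Lemma nn_h0_max n m (g : PolyHom (tree (Node n)) (tree (Node m))) :
  h0 g ord_max = ord_max.
Proof. exact: h0_max. Qed.

Lemma edge_comp n m (g : PolyHom (tree (Node n)) (tree (Node m))) j :
  compHom (edge j) g = edge (h0 g j).
Proof. by rewrite (hom_TN (compHom _ _)). Qed.

Lemma nn_pp n m (g : PolyHom (tree (Node n)) (tree (Node m))) (k : 'I_m) :
  @pp (tree (Node m)) k = h1 g tt.
Proof. by case: (h1 g tt). Qed.
Definition h2inv n m (g : PolyHom (tree (Node n)) (tree (Node m))) (k : 'I_m) : 'I_n :=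
  proj1_sig (constructive_indefinite_description _ (h2_surj (nn_pp g k))).

Lemma h2invK n m (g : PolyHom (tree (Node n)) (tree (Node m))) : cancel (h2inv g) (h2 g).
Proof. move=> k; rewrite /h2inv; by case: constructive_indefinite_description. Qed.

Lemma h2K n m (g : PolyHom (tree (Node n)) (tree (Node m))) : cancel (h2 g) (h2inv g).
Proof. move=> i; apply: (@h2_inj _ _ g); by rewrite h2invK. Qed.

Lemma node_card n m (g : PolyHom (tree (Node n)) (tree (Node m))) : n = m.
Proof.
apply/eqP; rewrite eqn_leq.
have i1 : injective (h2 g : 'I_n -> 'I_m) by move=> x y; apply: (@h2_inj n _ g).
have i2 : injective (h2inv g : 'I_m -> 'I_n) by exact: can_inj (h2invK g).
have := @leq_card (ordinal n) (ordinal m) (h2 g) i1; rewrite !card_ord => ->.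
have := @leq_card (ordinal m) (ordinal n) (h2inv g) i2; by rewrite !card_ord.
Qed.

Section MkNode.
Variables (n m : nat) (s : 'I_n -> 'I_m) (t : 'I_m -> 'I_n)
  (st : cancel s t) (ts : cancel t s).

Definition mk0 (j : 'I_n.+1) : 'I_m.+1 :=
  match unlift ord_max j with Some i => widen_ord (leqnSn m) (s i) | None => ord_max end.

Lemma lift_widen k (i : 'I_k) : lift ord_max i = widen_ord (leqnSn k) i.
Proof. apply: val_inj; by rewrite /= /bump leqNgt ltn_ord. Qed.

Definition mkNode : PolyHom (tree (Node n)) (tree (Node m)).
Proof.
refine (@Build_PolyHom (tree (Node n)) (tree (Node m)) mk0 s id _ _ _ _).
- move=> i /=; by rewrite /mk0 -lift_widen liftK.
- by [].
- move=> b /=; by rewrite /mk0 unlift_none.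
- move=> a y _; exists (t y); split; first by split; [case: a|].
  by move=> x [_ <-].
Defined.
End MkNode.

Definition Aut n := PolyHom (tree (Node n)) (tree (Node n)).

Definition free (C : Collection) := forall n (x : cobj C (Node n)) (g g' : Aut n),
  cmap g x = cmap g' x -> g = g'.

Lemma R0_free P : free (R0 P).
Proof.
move=> n x g g' /= E; apply: node_ext'.
move=> i; apply: (@h2_inj _ _ x).
by have := f_equal (fun k => h2 k i) E.
Qed.

Lemma iso_free C D : coll_iso C D -> free D -> free C.
Proof.
move=> [u [v [_ _]]] FD n x g g' E; apply: (FD _ (cmp u _ x)).
by rewrite -!natural E.
Qed.

Definition ainv n (g : Aut n) : Aut n := mkNode (h2invK g) (h2K g).

Lemma ainvK n (g : Aut n) : compHom (ainv g) g = idHom _.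
Proof. by apply: node_ext' => i /=; rewrite h2invK. Qed.

Section Orbits.
Variable C : Collection.

Definition orb n (x y : cobj C (Node n)) : Prop := exists g : Aut n, cmap g y = x.

Definition rep n (x : cobj C (Node n)) := epsilon (inhabits x) (orb x).

Lemma rep_spec n (x : cobj C (Node n)) : orb x (rep x).
Proof. apply: epsilon_spec; exists x, (idHom _); exact: cmap_id. Qed.

Lemma orb_cmap n (x : cobj C (Node n)) (g : Aut n) : orb (cmap g x) = orb x.
Proof.
apply: functional_extensionality => y; apply: propositional_extensionality.
split=> [[h Eh]|[h Eh]].
- exists (compHom (ainv g) h); by rewrite cmap_comp Eh -cmap_comp ainvK cmap_id.
- exists (compHom g h); by rewrite cmap_comp Eh.
Qed.

Lemma rep_cmap n (x : cobj C (Node n)) (g : Aut n) : rep (cmap g x) = rep x.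
Proof.
rewrite /rep; move: (inhabits (cmap g x)) (inhabits x); rewrite orb_cmap => i1 i2.
by rewrite (proof_irrelevance _ i1 i2).
Qed.

Lemma rep_idem n (x : cobj C (Node n)) : rep (rep x) = rep x.
Proof. have [g Eg] := rep_spec x; by rewrite -{2}Eg rep_cmap. Qed.

Definition gof n (x : cobj C (Node n)) : Aut n :=
  proj1_sig (constructive_indefinite_description _ (rep_spec x)).

Lemma gofP n (x : cobj C (Node n)) : cmap (gof x) (rep x) = x.
Proof. rewrite /gof; by case: constructive_indefinite_description. Qed.

Hypothesis Cfree : free C.

Lemma gof_cmap n (x : cobj C (Node n)) (f : Aut n) : gof (cmap f x) = compHom f (gof x).
Proof.
apply: (Cfree (x := rep x)); by rewrite -{1}(rep_cmap x f) gofP cmap_comp gofP.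
Qed.

Lemma gof_eq n (x : cobj C (Node n)) (g : Aut n) : cmap g (rep x) = x -> gof x = g.
Proof. move=> E; apply: (Cfree (x := rep x)); by rewrite gofP. Qed.
End Orbits.

Lemma free_flat C : free C -> flat C.
Proof.
move=> FC Z u [ginv [Gu uG]] us.
pose pre a (y : cobj C a) := proj1_sig (constructive_indefinite_description _ (us a y)).
have preP a y : cmp u a (pre a y) = y by rewrite /pre; case: constructive_indefinite_description.
pose vc a : cobj C a -> cobj Z a :=
  match a with Triv => pre Triv | Node n => fun x => cmap (gof x) (pre _ (rep x)) end.
have uv a y : cmp u a (vc a y) = y.
  case: a y => [|n] y /=; first exact: preP.
  by rewrite natural preP gofP.
have uinj (x y : cobj Z Triv) : cmp u Triv x = cmp u Triv y -> x = y.
  by move=> E; rewrite -(Gu x) E Gu.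
have nat_v : forall a b (f : PolyHom (tree a) (tree b)) (x : cobj C b),
    vc a (cmap f x) = cmap f (vc b x).
  case=> [|n] [|m] f x.
  - by rewrite (hom_TT f) !cmap_id.
  - by apply: uinj; rewrite uv natural uv.
  - by case: (hom_NT f).
  - have e := node_card f; subst m.
    by rewrite /= rep_cmap (gof_cmap FC) cmap_comp.
exists (Build_CollHom nat_v); exact: uv.
Qed.

Lemma In_enum k (i : 'I_k) : List.In i (enum 'I_k).
Proof.
have : i \in enum 'I_k by rewrite mem_enum.
elim: (enum 'I_k) => [|z l IH] //=; rewrite in_cons => /orP [/eqP ->|/IH]; by [left|right].
Qed.

Definition PS : PolyEnd.
Proof.
refine (@Build_PolyEnd unit {k : nat & 'I_k} nat (fun _ => tt) (@projT1 _ _) (fun _ => tt) _).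
move=> b; exists (List.map (fun i => existT (fun k => 'I_k) b i) (enum 'I_b)).
case=> k i /= <-; apply: List.in_map; exact: In_enum.
Defined.

Definition psi n : PolyHom (tree (Node n)) PS.
Proof.
refine (@Build_PolyHom (tree (Node n)) PS (fun _ => tt) (fun i => existT (fun k => 'I_k) n i)
   (fun _ => n) _ _ _ _) => //.
move=> a [k i] /= E; subst k; exists i; split; first by split; [case: a|].
move=> x [_ E]; apply: val_inj.
by have := f_equal (fun y : {k : nat & 'I_k} => nat_of_ord (projT2 y)) E.
Qed.

Definition Prod (C D : Collection) : Collection.
Proof.
refine (@Build_Collection (fun a => (cobj C a * cobj D a)%type)
  (fun a b f x => (cmap f x.1, cmap f x.2)) _ _).
- by move=> a [x y] /=; rewrite !cmap_id.
- by move=> a b c f g [x y] /=; rewrite !cmap_comp.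
Defined.

Definition fstHom (C D : Collection) : CollHom (Prod C D) C.
Proof. by refine (@Build_CollHom (Prod C D) C (fun a x => x.1) _). Defined.

Lemma flat_free C : flat C -> free C.
Proof.
move=> FC.
have triv_eq (f g : PolyHom (tree Triv) PS) : f = g.
  by apply: PolyHom_ext => //; case; case: (h0 f tt); case: (h0 g tt).
pose phi0 : PolyHom (tree Triv) PS := compHom (edge (n := 0) ord0) (psi 0).
have cp : colour_preserving (fstHom C (R0 PS)).
  exists (fun c => (c, phi0)); split=> [[x f]|y] //=.
  by rewrite (triv_eq f phi0).
have su : coll_surjective (fstHom C (R0 PS)).
  case=> [|n] y; first by exists (y, phi0).
  by exists (y, psi n).
have [v Hv] := FC _ _ cp su.
move=> n x g g' E.
apply: (R0_free (x := (cmp v _ x).2)).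
have := f_equal (fun z => (cmp v _ z).2) E.
by rewrite !natural.
Qed.

Lemma bij_iso (C D : Collection) (u : CollHom C D) :
  (forall a, injective (cmp u a)) -> (forall a (y : cobj D a), exists x, cmp u a x = y) ->
  coll_iso C D.
Proof.
move=> ui us.
pose vc a (y : cobj D a) := proj1_sig (constructive_indefinite_description _ (us a y)).
have uv a y : cmp u a (vc a y) = y by rewrite /vc; case: constructive_indefinite_description.
have nat_v : forall a b (f : PolyHom (tree a) (tree b)) (x : cobj D b),
    vc a (cmap f x) = cmap f (vc b x).
  by move=> a b f x; apply: ui; rewrite natural !uv.
exists u, (Build_CollHom nat_v); split=> a x //=; apply: ui; by rewrite uv.
Qed.

Section Build.
Variable C : Collection.
Hypothesis Cfree : free C.

Definition PB1 := {n : nat & {r : cobj C (Node n) | rep r = r}}.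
Definition PB2 := {b : PB1 & 'I_(projT1 b)}.
Definition rof (b : PB1) : cobj C (Node (projT1 b)) := proj1_sig (projT2 b).
Definition PBs (y : PB2) : colours C :=
  cmap (edge (widen_ord (leqnSn _) (projT2 y))) (rof (projT1 y)).
Definition PBt (b : PB1) : colours C := cmap (edge ord_max) (rof b).

Definition PB : PolyEnd.
Proof.
refine (@Build_PolyEnd (colours C) PB2 PB1 PBs (@projT1 _ _) PBt _).
move=> b; exists (List.map (fun i => existT (fun b : PB1 => 'I_(projT1 b)) b i) (enum 'I_(projT1 b))).
case=> k i /= <-; apply: List.in_map; exact: In_enum.
Defined.

Lemma PB2_eq (y z : PB2) : projT1 y = projT1 z -> val (projT2 y) = val (projT2 z) -> y = z.
Proof. case: y => b i; case: z => b' j /= E; subst b' => E; congr existT; exact: val_inj. Qed.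

Lemma mkb_eq n (r r' : cobj C (Node n)) p p' : r = r' ->
  existT (fun n => {r : cobj C (Node n) | rep r = r}) n (exist _ r p) = existT _ n (exist _ r' p').
Proof. move=> E; subst r'; by rewrite (proof_irrelevance _ p p'). Qed.

Definition bx n (x : cobj C (Node n)) : PB1 := existT _ n (exist _ (rep x) (rep_idem x)).

Definition uT (c : colours C) : PolyHom (tree Triv) PB.
Proof.
refine (@Build_PolyHom (tree Triv) PB (fun _ => c)
  (fun e => match e with end) (fun e => match e with end) _ _ _ _); by case.
Defined.

Definition uN n (x : cobj C (Node n)) : PolyHom (tree (Node n)) PB.
Proof.
refine (@Build_PolyHom (tree (Node n)) PB (fun j => cmap (edge j) x)
  (fun i => existT (fun b : PB1 => 'I_(projT1 b)) (bx x) (h2 (gof x) i)) (fun _ => bx x) _ _ _ _).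
- move=> i /=; rewrite /PBs /= -{1}(gofP x) -cmap_comp edge_comp.
  by rewrite (nn_h0_widen (gof x) i).
- by [].
- move=> b /=; rewrite /PBt /= -{1}(gofP x) -cmap_comp edge_comp.
  by rewrite (nn_h0_max (gof x)).
- move=> a [b k] /= E; subst b.
  exists (h2inv (gof x) k); split; first by split; [case: a|rewrite h2invK].
  move=> i [_ E]; rewrite -(h2K (gof x) i); congr h2inv; apply: val_inj.
  by have := f_equal (fun y : PB2 => nat_of_ord (projT2 y)) E.
Defined.

Definition ucomp a : cobj C a -> cobj (R0 PB) a :=
  match a with Triv => uT | Node n => @uN n end.

Lemma ucomp_nat a b (f : PolyHom (tree a) (tree b)) (x : cobj C b) :
  ucomp (cmap f x) = cmap f (ucomp x).
Proof.
case: a b f x => [|n] [|m] f x.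
- rewrite (hom_TT f) cmap_id /=; by apply: PolyHom_ext.
- by rewrite (hom_TN f); apply: PolyHom_ext => //; case.
- by case: (hom_NT f).
- have e := node_card f; subst m.
  have Eb : bx (cmap f x) = bx x by apply: mkb_eq; rewrite rep_cmap.
  apply: node_ext => /=; last exact: Eb.
  move=> i; apply: PB2_eq => //=.
  by rewrite (gof_cmap Cfree).
Qed.

Definition uHom : CollHom C (R0 PB) := Build_CollHom ucomp_nat.

Lemma u_inj a : injective (cmp uHom a).
Proof.
case: a => [|n] x y /= E.
  by have := f_equal (fun k : PolyHom (tree Triv) PB => h0 k tt) E.
have E1 := f_equal (fun k : PolyHom (tree (Node n)) PB => h1 k tt) E; rewrite /= in E1.
have Er : rep x = rep y.
  have := Eqdep_dec.inj_pair2_eq_dec _ PeanoNat.Nat.eq_dec _ _ _ _ E1.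
  by move/(f_equal (@proj1_sig _ _)).
have Eg : gof x = gof y.
  apply: node_ext' => i.
  have := f_equal (fun k : PolyHom (tree (Node n)) PB => nat_of_ord (projT2 (h2 k i))) E => /= H; exact: val_inj.
by rewrite -(gofP x) -(gofP y) Er Eg.
Qed.

Lemma u_surj a (y : cobj (R0 PB) a) : exists x, cmp uHom a x = y.
Proof.
case: a y => [|n] phi /=.
  by exists (h0 phi tt); apply: PolyHom_ext => //; case.
case EB: (h1 phi tt) => [m [r hr]].
have Hp i : projT1 (h2 phi i) = existT _ m (exist _ r hr).
  by rewrite -EB (hp phi i).
have Hs i : val (projT2 (h2 phi i)) < m.
  have H1 : projT1 (projT1 (h2 phi i)) = m by rewrite Hp.
  by rewrite -H1 ltn_ord.
pose s i : 'I_m := Ordinal (Hs i).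
have Ephi i : h2 phi i = existT (fun b : PB1 => 'I_(projT1 b)) (existT _ m (exist _ r hr)) (s i).
  by apply: PB2_eq.
have sinj : injective s.
  move=> i j E; apply: (@h2_inj _ _ phi); rewrite !Ephi.
  by congr existT.
have ssurj k : exists i, s i = k.
  have [i Ei] := @h2_surj _ _ phi (existT (fun b : PB1 => 'I_(projT1 b)) (existT _ m (exist _ r hr)) k) (esym EB).
  exists i; apply: val_inj; by rewrite /= Ei.
pose t k := proj1_sig (constructive_indefinite_description _ (ssurj k)).
have ts : cancel t s by move=> k; rewrite /t; case: constructive_indefinite_description.
have st : cancel s t by move=> i; apply: sinj; rewrite ts.
pose g := mkNode st ts.
have e := node_card g; subst m.
exists (cmap g r).
have Erep : rep (cmap g r) = r by rewrite rep_cmap.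
have Eg : gof (cmap g r) = g by apply: (gof_eq Cfree); rewrite Erep.
apply: PolyHom_ext => /=.
- move=> j; rewrite -cmap_comp edge_comp.
  case: (ord_cases j) => [->|[i ->]].
    by rewrite (nn_h0_max g) (h0_max phi) EB.
  by rewrite (nn_h0_widen g) (h0_widen phi) Ephi.
- move=> i; rewrite Ephi; apply: PB2_eq => /=.
    by apply: mkb_eq.
  by rewrite Eg.
- by case; rewrite EB; apply: mkb_eq.
Qed.

Lemma free_iso : coll_iso C (R0 PB).
Proof. exact: (bij_iso u_inj u_surj). Qed.
End Build.

Theorem mainTheorem20 (C : Collection) :
  (exists P : PolyEnd, coll_iso C (R0 P)) <-> flat C.
Proof.
split.
- move=> [P HP]; apply: free_flat; apply: (iso_free HP); exact: R0_free.
- move=> FC; exists (PB C); exact: (free_iso (flat_free FC)).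
Qed.
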